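(* Let $f : \widehat{\mathbb{Z}} \to \widehat{\mathbb{Z}}$ be congruence preserving and $p$ a prime number. The following are equivalent: (i) $\lambda_f(p) \ne p$. (ii) The reduction $f_p : \mathbb{Z}/p\mathbb{Z} \to \mathbb{Z}/p\mathbb{Z}$ is not a cyclic permutation of length $p$. (iii) For every $x \in \mathbb{Z}/p\mathbb{Z}$, the cycle length $l_x$ of $f_p$ on $x$ satisfies $l_x < p$. (iv) $\alpha(\lambda_f(p)) < p$.
   Context: $\widehat{\mathbb{Z}} = \varprojlim_n \mathbb{Z}/n\mathbb{Z}$; $s\equiv_n t$ means $s-t\in n\widehat{\mathbb{Z}}$. A continuous $f$ is congruence preserving if $s\equiv_n t$ implies $f(s)\equiv_n f(t)$ for all $s,t\in\widehat{\mathbb{Z}}$, $n\ge1$; it then induces reductions $f_n:\mathbb{Z}/n\mathbb{Z}\to\mathbb{Z}/n\mathbb{Z}$. For $x \in \mathbb{Z}/n\mathbb{Z}$, the cycle length $l_x$ of $f_n$ on $x$ is the least $l\ge1$ such that $f_n^k(x)=f_n^{k+l}(x)$ for some $k\ge0$; $\lambda_f(n)$, the period of $f_n$, is the least common multiple of all $l_x$. A cyclic permutation of length $p$ means a permutation of $\mathbb{Z}/p\mathbb{Z}$ consisting of a single cycle through all $p$ elements. $\alpha(m)$ denotes the largest prime-power divisor of the positive integer $m$ (with $\alpha(1)=1$). *)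

(* Defs.v *)
From mathcomp Require Import all_boot.
From mathcomp Require Import boolp.

Set Implicit Arguments.
Unset Strict Implicit.
Unset Printing Implicit Defensive.

(* Profinite integers as the inverse limit of Z/nZ:
   an element is a family of residues x k in Z/(k+1)Z (represented by a nat
   < k+1), compatible under the projections Z/(k+1)Z -> Z/(j+1)Z whenever
   (j+1) | (k+1). *)
Definition zhat_axiom (x : nat -> nat) : Prop :=
  (forall k, x k < k.+1) /\
  (forall j k, j.+1 %| k.+1 -> x k = x j %[mod j.+1]).

Definition Zhat := {x : nat -> nat | zhat_axiom x}.

Definition zc (s : Zhat) (k : nat) : nat := proj1_sig s k.

(* s == t (mod n) in Zhat, i.e. s - t \in n Zhat: s = t + n*u for some u,
   with the ring operations of Zhat computed componentwise. *)
Definition zcong (n : nat) (s t : Zhat) : Prop :=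
  exists u : Zhat, forall k, zc s k = zc t k + n * zc u k %[mod k.+1].

(* continuity for the profinite topology (basic neighbourhoods s + m Zhat) *)
Definition zcontinuous (f : Zhat -> Zhat) : Prop :=
  forall (s : Zhat) (n : nat), 0 < n ->
    exists2 m, 0 < m & forall t : Zhat, zcong m s t -> zcong n (f s) (f t).

Definition cong_preserving (f : Zhat -> Zhat) : Prop :=
  forall (n : nat) (s t : Zhat), 0 < n -> zcong n s t -> zcong n (f s) (f t).

Lemma zemb_axiom (x : nat) : zhat_axiom (fun k => x %% k.+1).
Proof.
rewrite /zhat_axiom; split=> [k|j k djk]; first by rewrite ltn_pmod.
by rewrite modn_mod modn_dvdm.
Qed.

Definition zemb (x : nat) : Zhat := exist _ _ (zemb_axiom x).

(* The reduction f_n : Z/nZ -> Z/nZ (n >= 1), with Z/nZ represented by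
   {0, ..., n-1}:  f_n (x mod n) = f(x) mod n. *)
Definition fred (f : Zhat -> Zhat) (n : nat) (x : nat) : nat :=
  zc (f (zemb x)) n.-1.

(* cycle length l_x of g on x: least l >= 1 with g^k x = g^(k+l) x for some k
   (0 if no such l exists, which does not happen for maps of a finite set). *)
Definition is_cyc (g : nat -> nat) (x l : nat) : Prop :=
  0 < l /\ exists k, iter k g x = iter (k + l) g x.

Definition cycle_len (g : nat -> nat) (x : nat) : nat :=
  match pselect (exists l, asbool (is_cyc g x l)) with
  | left h => ex_minn h
  | right _ => 0
  end.

Definition lambda_f (f : Zhat -> Zhat) (n : nat) : nat :=
  \big[lcmn/1]_(x < n) cycle_len (fred f n) x.

Definition is_cyclic_perm (g : nat -> nat) (n : nat) : Prop :=
  exists2 x0, x0 < n &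
    perm_eq (traject g x0 n) (iota 0 n) /\ iter n g x0 = x0.

(* prime powers p^k (k >= 0, so 1 counts) *)
Definition is_ppow (d : nat) : bool :=
  asbool (exists p k, prime p /\ d = p ^ k).

Definition alpha (m : nat) : nat :=
  \max_(d < m.+1 | (d %| m) && is_ppow d) d.

(* Main.v *)
Require Import Defs.
From mathcomp Require Import all_boot.
From mathcomp Require Import boolp.

Lemma cycle_lenP (g : nat -> nat) x :
  (exists l, is_cyc g x l) ->
  is_cyc g x (cycle_len g x) /\ (forall l, is_cyc g x l -> cycle_len g x <= l).
Proof.
move=> [l0 Hl0]; rewrite /cycle_len; case: pselect => [h|[]]; last first.
  by exists l0; apply/asboolP.
case: ex_minnP => m /asboolP Hm Hmin; split=> // l Hl; apply: Hmin; exact/asboolP.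
Qed.

Lemma iter_lt (g : nat -> nat) p : (forall y, g y < p) ->
  forall n y, y < p -> iter n g y < p.
Proof. by move=> Hg; elim=> [|n IH] y Hy //=. Qed.

Lemma cyc_exists (g : nat -> nat) p : (forall y, g y < p) ->
  forall x, x < p -> exists2 l, l <= p & is_cyc g x l.
Proof.
move=> Hg x Hx.
have: ~~ uniq (traject g x p.+1).
  apply/negP=> U.
  have := @uniq_leq_size _ _ (iota 0 p) U.
  rewrite size_traject size_iota ltnn => H; apply: notF; apply: H => y /trajectP [i _ ->].
  by rewrite mem_iota add0n (@iter_lt g p Hg) .
case/(uniqPn x)=> i [j [ij]]; rewrite size_traject => jp E0.
have E : iter i g x = iter j g x.
  by move: E0; rewrite !nth_traject // (ltn_trans ij jp).
exists (j - i); first by rewrite leq_subLR; apply: leq_trans (leq_addl _ _); rewrite -ltnS.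
split; first by rewrite subn_gt0.
by exists i; rewrite subnKC ?(ltnW ij).
Qed.

Lemma ppow_lcm q k m n : prime q -> 0 < m -> 0 < n ->
  q ^ k %| lcmn m n -> (q ^ k %| m) || (q ^ k %| n).
Proof.
move=> pq m0 n0; rewrite !pfactor_dvdn // ?lcmn_gt0 ?m0 // logn_lcm //.
by rewrite leq_max.
Qed.

Lemma ppow_biglcm q k n (F : 'I_n -> nat) : prime q -> 0 < k ->
  (forall i, 0 < F i) -> q ^ k %| \big[lcmn/1]_(i < n) F i ->
  exists i, q ^ k %| F i.
Proof.
move=> pq k0; elim: n F => [|n IH] F F0.
  by rewrite big_ord0 pfactor_dvdn // logn1 leqNgt k0.
rewrite big_ord_recr /= => D.
have B0 : 0 < \big[lcmn/1]_(i < n) F (widen_ord (leqnSn n) i).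
  by elim/big_ind: _ => // a b a0 b0; rewrite lcmn_gt0 a0.
case/orP: (@ppow_lcm q k _ _ pq B0 (F0 ord_max) D) => [/(IH _ (fun i => F0 _))|]; last by exists ord_max.
by case=> i Hi; exists (widen_ord (leqnSn n) i).
Qed.

Lemma Lspec (g : nat -> nat) p : (forall y, g y < p) -> forall x, x < p ->
  [/\ 0 < cycle_len g x, cycle_len g x <= p, is_cyc g x (cycle_len g x) &
      forall l, is_cyc g x l -> cycle_len g x <= l].
Proof.
move=> Hg x Hx; have [l lp Hl] := cyc_exists g p Hg x Hx.
have [[H1 H2] H3] := cycle_lenP g x (ex_intro _ l Hl).
split=> //; exact: leq_trans (H3 _ Hl) lp.
Qed.

Lemma Bcyc (g : nat -> nat) p : (forall y, g y < p) -> forall x, x < p ->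
  cycle_len g x = p -> is_cyclic_perm g p.
Proof.
move=> Hg x Hx Lp; have [_ _ [_ [k Ek]] Hmin] := Lspec g p Hg x Hx; rewrite Lp in Ek Hmin.
set x0 := iter k g x.
have x0p : x0 < p by exact: (@iter_lt g p Hg).
have Ix0 : iter p g x0 = x0 by rewrite /x0 -iterD addnC -Ek.
have U : uniq (traject g x0 p).
  apply: contraT => /(uniqPn x0) [i [j [ij]]]; rewrite size_traject => jp.
  rewrite !nth_traject // ?(ltn_trans ij jp) // /x0 -!iterD => E.
  have : p <= j - i.
    apply: Hmin; split; first by rewrite subn_gt0.
    by exists (i + k); rewrite addnAC subnKC ?(ltnW ij) // -E addnC.
  by rewrite leqNgt (leq_ltn_trans (leq_subr _ _) jp).
exists x0 => //; split => //.
have sub : {subset traject g x0 p <= iota 0 p}.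
  by move=> y /trajectP [i _ ->]; rewrite mem_iota add0n (@iter_lt g p Hg).
have [_ Hm] := uniq_min_size U sub (eq_leq (etrans (size_iota 0 p) (esym (size_traject g x0 p)))).
by apply: uniq_perm => //; exact: iota_uniq.
Qed.

Lemma iter_modp (g : nat -> nat) p x0 : iter p g x0 = x0 ->
  forall n, iter n g x0 = iter (n %% p) g x0.
Proof.
move=> I n; rewrite {1}(divn_eq n p) addnC iterD; congr iter.
by elim: (n %/ p) => [|m IH] //; rewrite mulSn iterD IH I.
Qed.

Lemma Ccyc (g : nat -> nat) p : (forall y, g y < p) -> is_cyclic_perm g p ->
  forall x, x < p -> cycle_len g x = p.
Proof.
move=> Hg [x0 x0p [P I]] x Hx.
have [L0 _ [_ [k Ek]] Hmin] := Lspec g p Hg x Hx.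
have U : uniq (traject g x0 p) by rewrite (perm_uniq P) iota_uniq.
have : x \in traject g x0 p by rewrite (perm_mem P) mem_iota.
case/trajectP=> i ip Ex.
apply/eqP; rewrite eqn_leq; apply/andP; split.
  apply: Hmin; split; first exact: leq_ltn_trans (leq0n _) x0p.
  by exists 0; rewrite add0n Ex /= -iterD addnC iterD I.
rewrite leqNgt; apply/negP => Lp.
move: Ek; rewrite Ex -!iterD (iter_modp g p x0 I (k + i)) (iter_modp g p x0 I (k + _ + i)).
have p0 : 0 < p by exact: leq_ltn_trans (leq0n _) x0p.
rewrite -!(nth_traject g (ltn_pmod _ p0)) -Ex => E.
have := uniqP x0 U; move/(_ ((k + i) %% p) ((k + cycle_len g x + i) %% p)).
rewrite !inE size_traject !ltn_pmod // => /(_ erefl erefl E) /eqP.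
rewrite addnAC -[X in X == _ %[mod _]]addn0 eqn_modDl mod0n eq_sym modn_small //.
by rewrite eqn0Ngt L0.
Qed.

Theorem lemma3p10 (f : Zhat -> Zhat) (p : nat) :
  zcontinuous f -> cong_preserving f -> prime p ->
  [/\ (lambda_f f p <> p <-> ~ is_cyclic_perm (fred f p) p),
      (~ is_cyclic_perm (fred f p) p <->
         (forall x, x < p -> cycle_len (fred f p) x < p)) &
      ((forall x, x < p -> cycle_len (fred f p) x < p) <->
         alpha (lambda_f f p) < p)].
Proof.
move=> _ _ pp.
have p0 : 0 < p := prime_gt0 pp.
set g := fred f p.
have Hg : forall y, g y < p.
  move=> y; rewrite /g /fred /zc; case: (f (zemb y)) => s [Hs _] /=.
  by have := Hs p.-1; rewrite prednK.
have Lpos : forall i : 'I_p, 0 < cycle_len g i.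
  by move=> i; have [] := Lspec g p Hg i (ltn_ord i).
have lam_cyc : is_cyclic_perm g p -> lambda_f f p = p.
  move=> C; rewrite /lambda_f -/g; apply/eqP; rewrite eqn_dvd; apply/andP; split.
    elim/big_ind: _ => //; first by move=> a b Ha Hb; rewrite dvdn_lcm Ha Hb.
    by move=> i _; rewrite (Ccyc g p Hg C i (ltn_ord i)).
  apply: (@biglcmn_sup _ (Ordinal p0)) => //.
  by rewrite (Ccyc g p Hg C 0 p0).
have cyc_lam : lambda_f f p = p -> is_cyclic_perm g p.
  move=> E.
  have D : p ^ 1 %| \big[lcmn/1]_(i < p) cycle_len g i.
    by rewrite expn1 -/g; move: E; rewrite /lambda_f => ->.
  have [i Hi] := ppow_biglcm p 1 p (fun i => cycle_len g i) pp erefl Lpos D.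
  apply: (Bcyc g p Hg i (ltn_ord i)); apply/eqP; rewrite eqn_leq.
  have [_ Lle _ _] := Lspec g p Hg i (ltn_ord i).
  by rewrite Lle /=; move: (dvdn_leq (Lpos i) Hi); rewrite expn1.
have ii_iii : ~ is_cyclic_perm g p <-> (forall x, x < p -> cycle_len g x < p).
  split.
    move=> nC x xp; have [_ Lle _ _] := Lspec g p Hg x xp.
    rewrite ltn_neqAle Lle andbT; apply/eqP => E; exact: nC (Bcyc g p Hg x xp E).
  by move=> H C; have := H 0 p0; rewrite (Ccyc g p Hg C 0 p0) ltnn.
split => //.
  by split => [N C | N E]; [exact: N (lam_cyc C) | exact: N (cyc_lam E)].
split.
  move=> H; rewrite /alpha.
  apply: (big_ind (fun m => m < p)) => //.
    by move=> a b Ha Hb; rewrite gtn_max Ha Hb.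
  move=> d /andP [Dd /asboolP [q [k [pq Ed]]]].
  case: k Ed => [|k] Ed; first by rewrite Ed expn0 prime_gt1.
  rewrite /lambda_f -/g Ed in Dd.
  have [i Hi] := ppow_biglcm q k.+1 p (fun i => cycle_len g i) pq erefl Lpos Dd.
  rewrite Ed; apply: leq_ltn_trans (dvdn_leq (Lpos i) Hi) (H i (ltn_ord i)).
move=> Ha; apply: contrapT => nH.
have C : is_cyclic_perm g p by apply: contrapT => nC; apply: nH; apply/ii_iii.
move: Ha; rewrite (lam_cyc C) /alpha; apply/negP; rewrite -leqNgt.
have := @leq_bigmax_cond _ (fun d : 'I_p.+1 => (d %| p) && is_ppow d)
  (fun d => nat_of_ord d) ord_max; apply.
rewrite /= dvdnn /=; apply/asboolP; exists p, 1; by rewrite expn1.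
Qed.
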